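(* Let $a_1,a_2,b,c$ be positive integers with $a_1<a_2<b<c\leq 0.25\,a_1^2b^3$ such that $\{a_1,b,c\}$ and $\{a_2,b,c\}$ are $D(4)$-triples. Then $\{a_1,a_2,b,c\}$ is a $D(4)$-quadruple.
   Context: A $D(4)$-$m$-tuple is a set of $m$ distinct positive integers such that the product of any two distinct elements increased by $4$ is a perfect square ($m=3$: triple, $m=4$: quadruple). *)

(* Defs.v *)
From mathcomp Require Import all_boot.

Definition is_square (n : nat) : Prop := exists k : nat, n = k * k.

Definition D4pair (x y : nat) : Prop := is_square (x * y + 4).

Definition D4tuple (s : seq nat) : Prop :=
  uniq s /\ all (fun x => 0 < x) s /\
  (forall x y, x \in s -> y \in s -> x != y -> D4pair x y).

(* Main.v *)
Require Import Defs.
From Stdlib Require Import ZArith Lia.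
Open Scope Z_scope.

Lemma sq_even (x : Z) : Z.even (x*x) = Z.even x.
Proof. rewrite Z.even_mul. destruct (Z.even x); reflexivity. Qed.

Lemma half (a b c r s t : Z) : 0 < a -> a < b -> b < c -> 0 <= r -> 0 <= s -> 0 <= t ->
  r*r = a*b+4 -> s*s = a*c+4 -> t*t = b*c+4 ->
  exists u e, 0 < u /\ u*u = a*e+4 /\ t*u = b+c-a-e.
Proof.
  intros Ha Hab Hbc Hr Hs Ht Er Es Et.
  assert (Hev : Z.even (r*s - a*t) = true).
  { assert (E1 := f_equal Z.even Er). assert (E2 := f_equal Z.even Es).
    assert (E3 := f_equal Z.even Et).
    rewrite sq_even in E1, E2, E3.
    rewrite Z.even_add, Z.even_mul in E1, E2, E3.
    rewrite Z.even_sub, !Z.even_mul.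
    simpl in E1, E2, E3.
    destruct (Z.even a), (Z.even b), (Z.even c), (Z.even r), (Z.even s), (Z.even t);
      simpl in *; congruence. }
  apply Z.even_spec in Hev. destruct Hev as [u Hu].
  exists u, (b+c-a-t*u).
  assert (Hpos : a*t < r*s).
  { assert (H2 : (r*s)*(r*s) = (a*b+4)*(a*c+4)) by (rewrite <- Er, <- Es; ring).
    assert (H3 : (a*t)*(a*t) = a*a*(b*c+4)) by (rewrite <- Et; ring).
    destruct (Z.lt_ge_cases (a*t) (r*s)) as [h|h]; [exact h|].
    exfalso. assert (0 <= r*s) by nia.
    assert ((r*s)*(r*s) <= (a*t)*(a*t)) by nia. nia. }
  split; [lia|]. split; [|lia].
  assert (4*(u*u) = (r*s - a*t)*(r*s-a*t)) by (rewrite Hu; ring).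
  assert (H2 : (r*s)*(r*s) = (a*b+4)*(a*c+4)) by (rewrite <- Er, <- Es; ring).
  assert (H3 : (a*t)*(a*t) = a*a*(b*c+4)) by (rewrite <- Et; ring).
  assert (4*(u*u) = 4*(a*(b+c-a-t*u)+4)).
  { rewrite H. replace (4*(a*(b+c-a-t*u)+4)) with (4*a*(b+c-a) - 2*a*t*(2*u) + 16) by ring.
    rewrite <- Hu.
    replace ((r*s - a*t)*(r*s-a*t)) with ((r*s)*(r*s) - 2*a*t*(r*s) + (a*t)*(a*t)) by ring.
    rewrite H2, H3.
    replace (2*a*t*(r*s-a*t)) with (2*a*t*(r*s) - 2*a*a*(t*t)) by ring.
    rewrite Et. ring. }
  lia.
Qed.


Lemma sq_lt (x y : Z) : 0 <= x -> 0 <= y -> x*x < y*y -> x < y.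
Proof. intros. destruct (Z.lt_ge_cases x y) as [h|h]; auto.
  assert (y*y <= x*x) by (apply Z.mul_le_mono_nonneg; lia). lia. Qed.

Lemma sq_mono (x y : Z) : 0 <= x -> x < y -> x*x < y*y.
Proof. intros. apply Z.mul_lt_mono_nonneg; lia. Qed.

Lemma pos_of_prod (a e : Z) : 0 < a -> 0 <= a*e -> 0 <= e.
Proof. intros. destruct (Z.lt_ge_cases e 0); [|lia].
  assert (a*e < 0) by (apply Z.mul_pos_neg; lia). lia. Qed.

Lemma core (a1 a2 b c r1 s1 r2 s2 t : Z) :
  0 < a1 -> a1 < a2 -> a2 < b -> b < c ->
  0 <= r1 -> 0 <= s1 -> 0 <= r2 -> 0 <= s2 -> 0 <= t ->
  4*c <= a1*a1*(b*b*b) ->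
  r1*r1 = a1*b+4 -> s1*s1 = a1*c+4 -> r2*r2 = a2*b+4 -> s2*s2 = a2*c+4 -> t*t = b*c+4 ->
  exists k, 0 <= k /\ a1*a2+4 = k*k.
Proof.
  intros H1 H12 H2b Hbc Hr1 Hs1 Hr2 Hs2 Ht Hbd Er1 Es1 Er2 Es2 Et.
  destruct (half a1 b c r1 s1 t) as [u1 [e1 [Hu1 [Q1 T1]]]]; try lia.
  destruct (half a2 b c r2 s2 t) as [u2 [e2 [Hu2 [Q2 T2]]]]; try lia.
  assert (Htb : b < t).
  { apply sq_lt; try lia. assert (b*b < b*c) by (apply Z.mul_lt_mono_pos_l; lia). lia. }
  assert (Hd : t*u1 - t*u2 = (a2+e2) - (a1+e1)) by lia.
  destruct (Z.lt_total u1 u2) as [Hlt|[Heq|Hgt]].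
  - exfalso.
    assert (4 <= u2*u2) by (apply (Z.mul_le_mono_nonneg 2 u2 2 u2); lia).
    assert (He2 : 0 <= e2) by (apply (pos_of_prod a2); lia).
    assert (t <= t*u2 - t*u1).
    { rewrite <- Z.mul_sub_distr_l. rewrite <- (Z.mul_1_r t) at 1.
      apply Z.mul_le_mono_nonneg_l; lia. }
    assert (He1 : t < e1) by lia.
    assert (HX0 : 0 <= t*u1) by (apply Z.mul_nonneg_nonneg; lia).
    assert (HX : t*u1 < c) by lia.
    assert (Hu : a1*t < u1*u1).
    { assert (a1*t < a1*e1) by (apply Z.mul_lt_mono_pos_l; lia). lia. }
    assert (Hsq : (t*u1)*(t*u1) < c*c) by (apply sq_mono; lia).
    assert (Htt : 0 < t*t) by (apply Z.mul_pos_pos; lia).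
    assert (Ha1 : 0 < a1*a1) by (apply Z.mul_pos_pos; lia).
    assert (HA : a1*t*(t*t) < c*c).
    { assert ((a1*t)*(t*t) < (u1*u1)*(t*t)) by (apply Z.mul_lt_mono_pos_r; lia).
      replace ((t*u1)*(t*u1)) with ((u1*u1)*(t*t)) in Hsq by ring. lia. }
    assert (HA0 : 0 <= a1*t*(t*t)) by (apply Z.mul_nonneg_nonneg; [apply Z.mul_nonneg_nonneg|]; lia).
    assert (HB : (a1*t*(t*t))*(a1*t*(t*t)) < (c*c)*(c*c)) by (apply sq_mono; lia).
    assert (HT : b*c < t*t) by lia.
    assert (Hbc0 : 0 <= b*c) by (apply Z.mul_nonneg_nonneg; lia).
    assert (HC1 : (b*c)*(b*c) < (t*t)*(t*t)) by (apply sq_mono; lia).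
    assert (HC : (b*c)*(b*c)*(b*c) < (t*t)*(t*t)*(t*t)).
    { apply Z.mul_lt_mono_nonneg; try lia; apply Z.mul_nonneg_nonneg; lia. }
    assert (HD : a1*a1*((b*c)*(b*c)*(b*c)) < (c*c)*(c*c)).
    { assert (a1*a1*((b*c)*(b*c)*(b*c)) < a1*a1*((t*t)*(t*t)*(t*t))).
      { apply Z.mul_lt_mono_pos_l; lia. }
      replace ((a1*t*(t*t))*(a1*t*(t*t))) with (a1*a1*((t*t)*(t*t)*(t*t))) in HB by ring.
      lia. }
    assert (HE : a1*a1*(b*b*b) < c).
    { assert (Hc3 : 0 < c*c*c) by (apply Z.mul_pos_pos; [apply Z.mul_pos_pos|]; lia).
      replace (a1*a1*((b*c)*(b*c)*(b*c))) with ((a1*a1*(b*b*b))*(c*c*c)) in HD by ring.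
      replace ((c*c)*(c*c)) with (c*(c*c*c)) in HD by ring.
      apply (Z.mul_lt_mono_pos_r (c*c*c)); lia. }
    lia.
  - subst u2.
    assert (Hs : a1 + e1 = a2 + e2) by lia.
    assert (Hp : a1*e1 = a2*e2) by lia.
    assert (E : (a2-a1)*(a1-e2) = 0).
    { replace e1 with (a2+e2-a1) in Hp by lia.
      replace ((a2-a1)*(a1-e2)) with (a1*(a2+e2-a1) - a2*e2) by ring. lia. }
    apply Z.mul_eq_0 in E. destruct E as [E|E]; [lia|].
    exists u1. split; [lia|]. replace e2 with a1 in Q2 by lia. lia.
  - exfalso.
    assert (4 <= u1*u1) by (apply (Z.mul_le_mono_nonneg 2 u1 2 u1); lia).
    assert (He1 : 0 <= e1) by (apply (pos_of_prod a1); lia).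
    assert (t <= t*u1 - t*u2).
    { rewrite <- Z.mul_sub_distr_l. rewrite <- (Z.mul_1_r t) at 1.
      apply Z.mul_le_mono_nonneg_l; lia. }
    assert (u2*u2 < u1*u1) by (apply sq_mono; lia).
    assert (Hp : a2*e2 < a1*e1) by lia.
    assert (He : e1 < e2) by lia.
    assert (a1*e1 <= a2*e1) by (apply Z.mul_le_mono_nonneg_r; lia).
    assert (a2*e1 < a2*e2) by (apply Z.mul_lt_mono_pos_l; lia).
    lia.
Qed.
Close Scope Z_scope.
From mathcomp Require Import all_boot.

Lemma toZeq (r a b : nat) : r * r = a * b + 4 -> (Z.of_nat r * Z.of_nat r = Z.of_nat a * Z.of_nat b + 4)%Z.
Proof. move=> H. have := f_equal Z.of_nat H. rewrite Nat2Z.inj_add !Nat2Z.inj_mul. done. Qed.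
Lemma toZbd (a c b : nat) : 4 * c <= a ^ 2 * b ^ 3 -> (4 * Z.of_nat c <= Z.of_nat a * Z.of_nat a * (Z.of_nat b * Z.of_nat b * Z.of_nat b))%Z.
Proof. rewrite !expnS expn0 !muln1 => /leP H. have := inj_le _ _ H. rewrite !Nat2Z.inj_mul. lia. Qed.
Lemma toZlt (a b : nat) : a < b -> (Z.of_nat a < Z.of_nat b)%Z.
Proof. move=> /ltP. lia. Qed.

Arguments toZeq {r a b}.
Arguments toZbd {a c b}.
Arguments toZlt {a b}.

Lemma D4pair_sym x y : D4pair x y -> D4pair y x.
Proof. by rewrite /D4pair mulnC. Qed.

Lemma getpair (s : seq nat) : forall x y, D4tuple s -> x \in s -> y \in s -> x != y -> exists k, x * y + 4 = k * k.
Proof. by move=> x y [_ [_ H]] hx hy hxy; case: (H x y hx hy hxy) => k ->; exists k. Qed.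

Theorem mainTheorem12 (a1 a2 b c : nat) :
  0 < a1 -> a1 < a2 -> a2 < b -> b < c ->
  4 * c <= a1 ^ 2 * b ^ 3 ->
  D4tuple [:: a1; b; c] -> D4tuple [:: a2; b; c] ->
  D4tuple [:: a1; a2; b; c].
Proof.
  move=> H1 H12 H2b Hbc Hbd T1 T2.
  have H1b : a1 < b by apply: ltn_trans H2b.
  have H2c : a2 < c by apply: ltn_trans Hbc.
  have H1c : a1 < c by apply: ltn_trans H2c.
  have ne : forall x y : nat, x < y -> x != y by move=> x y h; rewrite neq_ltn h.
  have [r1 Er1] : exists k, a1 * b + 4 = k * k.
  { apply: (getpair _ a1 b T1); rewrite ?inE ?eqxx ?orbT //; exact: ne _ _ H1b. }
  have [s1 Es1] : exists k, a1 * c + 4 = k * k.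
  { apply: (getpair _ a1 c T1); rewrite ?inE ?eqxx ?orbT //; exact: ne _ _ H1c. }
  have [t Et] : exists k, b * c + 4 = k * k.
  { apply: (getpair _ b c T1); rewrite ?inE ?eqxx ?orbT //; exact: ne _ _ Hbc. }
  have [r2 Er2] : exists k, a2 * b + 4 = k * k.
  { apply: (getpair _ a2 b T2); rewrite ?inE ?eqxx ?orbT //; exact: ne _ _ H2b. }
  have [s2 Es2] : exists k, a2 * c + 4 = k * k.
  { apply: (getpair _ a2 c T2); rewrite ?inE ?eqxx ?orbT //; exact: ne _ _ H2c. }
  have [k [Hk Ek]] := core _ _ _ _ _ _ _ _ _ (toZlt H1) (toZlt H12) (toZlt H2b) (toZlt Hbc)
    (Nat2Z.is_nonneg r1) (Nat2Z.is_nonneg s1) (Nat2Z.is_nonneg r2) (Nat2Z.is_nonneg s2)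
    (Nat2Z.is_nonneg t) (toZbd Hbd) (toZeq (esym Er1)) (toZeq (esym Es1)) (toZeq (esym Er2)) (toZeq (esym Es2)) (toZeq (esym Et)).
  have P12 : D4pair a1 a2.
  { exists (Z.to_nat k). apply: Nat2Z.inj. rewrite Nat2Z.inj_add !Nat2Z.inj_mul Z2Nat.id //. }
  have P1b : D4pair a1 b by exists r1.
  have P1c : D4pair a1 c by exists s1.
  have P2b : D4pair a2 b by exists r2.
  have P2c : D4pair a2 c by exists s2.
  have Pbc : D4pair b c by exists t.
  split; last split.
  - rewrite /= !inE !negb_or (ne _ _ H12) (ne _ _ H1b) (ne _ _ H1c) (ne _ _ H2b) (ne _ _ H2c) (ne _ _ Hbc).
    done.
  - rewrite /= H1 (ltn_trans H1 H12) (ltn_trans H1 H1b) (ltn_trans H1 H1c). done.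
  - move=> x y; rewrite !inE => /or4P [] /eqP -> /or4P [] /eqP -> //; rewrite ?eqxx //= => _;
      by apply: D4pair_sym.
Qed.
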